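(* Let $K\subset\mathbb{R}$ be a regular compact set, let $g$ be the Green function of $\overline{\mathbb{C}}\setminus K$ with pole at infinity, and for $\delta>0$ put $G(\delta):=\max\{ g(z): z\in\mathbb{C},\ \operatorname{dist}(z,K)\le 2\delta\}$. Let $0<\tau\le 1$ and let $x_0,\ldots,x_{n-1}\in K$ be a $\tau$-quasi Leja sequence. Then for every $\delta>0$, $$|x_i-x_j|\ge \tau\delta e^{-nG(\delta)}\quad\text{for all } i,j\in\{0,\ldots,n-1\},\ i\ne j.$$
   Context: A compact set $K\subset\mathbb{C}$ is regular if the Green function $g(z)=g_{\overline{\mathbb{C}}\setminus K}(z,\infty)$ of $\overline{\mathbb{C}}\setminus K$ with pole at infinity is continuous on $\mathbb{C}$ (with $g=0$ on $K$). For $0<\tau\le1$, a sequence $x_0,\ldots,x_{n-1}\in K$ is $\tau$-quasi Leja if for every $k=1,\ldots,n-1$, $\prod_{j<k}|x_k-x_j|\ge\tau\max_{x\in K}\prod_{j<k}|x-x_j|$. *)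

(* Defs.v *)
From Stdlib Require Import Reals Lra.
From Stdlib Require Export Rtopology.
From Coquelicot Require Export Coquelicot.
Open Scope R_scope.

Definition RtoC (x : R) : C := (x, 0).

Definition dx (f : C -> R) (p : C) : R := Derive (fun t => f (t, snd p)) (fst p).
Definition dy (f : C -> R) (p : C) : R := Derive (fun t => f (fst p, t)) (snd p).

Definition harmonic_on (U : C -> Prop) (f : C -> R) : Prop :=
  forall p : C, U p ->
    ex_derive (fun t => f (t, snd p)) (fst p) /\
    ex_derive (fun t => f (fst p, t)) (snd p) /\
    ex_derive (fun t => dx f (t, snd p)) (fst p) /\
    ex_derive (fun t => dx f (fst p, t)) (snd p) /\
    ex_derive (fun t => dy f (t, snd p)) (fst p) /\
    ex_derive (fun t => dy f (fst p, t)) (snd p) /\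
    continuous (dx (dx f)) p /\ continuous (dy (dx f)) p /\
    continuous (dx (dy f)) p /\ continuous (dy (dy f)) p /\
    dx (dx f) p + dy (dy f) p = 0.

(* g is the Green function of (extended C) \ K with pole at infinity, and it is
   continuous on C with g = 0 on K (i.e. K is regular and g is extended by 0). *)
Definition regular_green (K : R -> Prop) (g : C -> R) : Prop :=
  (forall z : C, continuous g z) /\
  (forall x : R, K x -> g (RtoC x) = 0) /\
  harmonic_on (fun z => ~ (snd z = 0 /\ K (fst z))) g /\
  (exists M R0 : R, forall z : C, R0 < Cmod z -> Rabs (g z - ln (Cmod z)) <= M).

(* z is within distance r of K (K compact, so dist(z,K) <= r iff some point of
   K is at distance <= r). *)
Definition near_K (K : R -> Prop) (r : R) (z : C) : Prop :=
  exists w : R, K w /\ Cmod (z - RtoC w) <= r.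

Definition is_G (K : R -> Prop) (g : C -> R) (delta M : R) : Prop :=
  (forall z, near_K K (2 * delta) z -> g z <= M) /\
  (exists z, near_K K (2 * delta) z /\ g z = M).

Fixpoint prodlt (f : nat -> R) (k : nat) : R :=
  match k with O => 1 | S k' => prodlt f k' * f k' end.

Definition quasi_leja (K : R -> Prop) (tau : R) (x : nat -> R) (n : nat) : Prop :=
  (forall i, (i < n)%nat -> K (x i)) /\
  forall k, (1 <= k)%nat -> (k < n)%nat ->
    forall y, K y ->
      tau * prodlt (fun j => Rabs (y - x j)) k <= prodlt (fun j => Rabs (x k - x j)) k.

(* Main.v *)
Require Import Defs.
From Stdlib Require Import Reals Lra Lia Classical ClassicalEpsilon.
From Coquelicot Require Import Coquelicot.
Open Scope R_scope.

Definition Om (K : R -> Prop) (z : C) : Prop := ~ (snd z = 0 /\ K (fst z)).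

Definition econt (f : C -> R) (z : C) : Prop :=
  forall e, 0 < e -> exists d, 0 < d /\ forall y : C,
    Rabs (fst y - fst z) < d -> Rabs (snd y - snd z) < d -> Rabs (f y - f z) < e.

Lemma cont_econt (f : C -> R) (z : C) : continuous f z -> econt f z.
Proof.
  intros Hc e He.
  apply filterlim_locally with (eps := mkposreal e He) in Hc.
  destruct Hc as [d Hd].
  exists d. split. apply cond_pos.
  intros y H1 H2. apply (Hd y). split; assumption.
Qed.

Lemma Om_open (K : R -> Prop) (z : C) : closed_set K -> Om K z ->
  exists r, 0 < r /\ forall y : C, Rabs (fst y - fst z) < r -> Rabs (snd y - snd z) < r -> Om K y.
Proof.
  intros HK Hz.
  destruct (Req_dec (snd z) 0) as [H0|H0].
  - assert (Hn : ~ K (fst z)) by (intro; apply Hz; auto).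
    destruct (HK (fst z) Hn) as [d Hd].
    exists d. split. apply cond_pos.
    intros y H1 H2 [H3 H4]. apply (Hd (fst y)). unfold disc. exact H1. exact H4.
  - exists (Rabs (snd z)). split. apply Rabs_pos_lt; auto.
    intros y H1 H2 [H3 H4]. rewrite H3 in H2.
    rewrite Rminus_0_l, Rabs_Ropp in H2. lra.
Qed.

Lemma second_deriv_max (f f1 : R -> R) (t0 r D : R) : 0 < r ->
  (forall t, Rabs (t - t0) < r -> is_derive f t (f1 t)) ->
  (forall t, Rabs (t - t0) < r -> f t <= f t0) ->
  is_derive f1 t0 D -> D <= 0.
Proof.
  intros Hr Hd Hm HD.
  assert (F0 : f1 t0 = 0).
  { assert (H := Hd t0). rewrite Rminus_diag, Rabs_R0 in H. specialize (H Hr).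
    apply is_derive_Reals in H.
    destruct (Rtotal_order (f1 t0) 0) as [Hl|[He|Hg]]; auto; exfalso.
    - destruct (H (- f1 t0 / 2)) as [dl Hdl]. lra.
      set (h := - Rmin (dl/2) (r/2)).
      assert (Hh1 : h < 0). { unfold h. assert (0 < Rmin (dl/2) (r/2)). apply Rmin_glb_lt. 
        generalize (cond_pos dl); lra. lra. lra. }
      assert (Hh2 : Rabs h < dl). { unfold h. rewrite Rabs_Ropp, Rabs_pos_eq.
        generalize (Rmin_l (dl/2) (r/2)) (cond_pos dl); lra. 
        assert (0 < Rmin (dl/2) (r/2)). apply Rmin_glb_lt. 
        generalize (cond_pos dl); lra. lra. lra. }
      assert (Hh3 : Rabs (t0 + h - t0) < r). { replace (t0 + h - t0) with h by ring.
        unfold h. rewrite Rabs_Ropp, Rabs_pos_eq.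
        generalize (Rmin_r (dl/2) (r/2)); lra.
        assert (0 < Rmin (dl/2) (r/2)). apply Rmin_glb_lt. 
        generalize (cond_pos dl); lra. lra. lra. }
      specialize (Hdl h ltac:(lra) Hh2). specialize (Hm _ Hh3).
      apply Rabs_def2 in Hdl. destruct Hdl as [A B].
      assert (Q : (f (t0 + h) - f t0) / h < 0) by lra.
      assert (Q2 : 0 <= (f (t0 + h) - f t0) / h).
      { unfold Rdiv. replace ((f (t0 + h) - f t0) * / h) with ((f t0 - f (t0 + h)) * / (- h)).
        apply Rmult_le_pos. lra. left. apply Rinv_0_lt_compat. lra.
        field. lra. }
      lra.
    - destruct (H (f1 t0 / 2)) as [dl Hdl]. lra.
      set (h := Rmin (dl/2) (r/2)).
      assert (Hh1 : 0 < h). { unfold h. apply Rmin_glb_lt. 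
        generalize (cond_pos dl); lra. lra. }
      assert (Hh2 : Rabs h < dl). { rewrite Rabs_pos_eq by lra.
        unfold h. generalize (Rmin_l (dl/2) (r/2)) (cond_pos dl); lra. }
      assert (Hh3 : Rabs (t0 + h - t0) < r). { replace (t0 + h - t0) with h by ring.
        rewrite Rabs_pos_eq by lra. unfold h. generalize (Rmin_r (dl/2) (r/2)); lra. }
      specialize (Hdl h ltac:(lra) Hh2). specialize (Hm _ Hh3).
      apply Rabs_def2 in Hdl. destruct Hdl as [A B].
      assert (Q : 0 < (f (t0 + h) - f t0) / h) by lra.
      assert (Q2 : (f (t0 + h) - f t0) / h <= 0).
      { unfold Rdiv. apply Rmult_le_0_r. lra. left. apply Rinv_0_lt_compat. lra. }
      lra. }
  destruct (Rle_or_lt D 0) as [HD0|HD0]; auto. exfalso.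
  apply is_derive_Reals in HD.
  destruct (HD (D / 2)) as [dl Hdl]. lra.
  set (h := Rmin (dl/2) (r/2)).
  assert (Hh1 : 0 < h). { unfold h. apply Rmin_glb_lt. 
    generalize (cond_pos dl); lra. lra. }
  assert (Hhd : h < dl). { unfold h. generalize (Rmin_l (dl/2) (r/2)) (cond_pos dl); lra. }
  assert (Hhr : h < r). { unfold h. generalize (Rmin_r (dl/2) (r/2)); lra. }
  assert (Pos : forall c, t0 < c <= t0 + h -> 0 < f1 c).
  { intros c Hc. specialize (Hdl (c - t0) ltac:(lra)).
    rewrite Rabs_pos_eq in Hdl by lra. specialize (Hdl ltac:(lra)).
    replace (t0 + (c - t0)) with c in Hdl by ring. rewrite F0 in Hdl.
    apply Rabs_def2 in Hdl. destruct Hdl as [A B].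
    assert (0 < (f1 c - 0) / (c - t0)) by lra.
    replace (f1 c) with (((f1 c - 0) / (c - t0)) * (c - t0)) by (field; lra).
    apply Rmult_lt_0_compat; lra. }
  destruct (MVT_cor2 f f1 t0 (t0 + h)) as [c [Hc1 Hc2]]. lra.
  { intros c Hc. apply is_derive_Reals. apply Hd. rewrite Rabs_pos_eq; lra. }
  assert (Hm2 := Hm (t0 + h)). replace (t0 + h - t0) with h in Hm2 by ring.
  rewrite Rabs_pos_eq in Hm2 by lra. specialize (Hm2 Hhr).
  assert (0 < f1 c * (t0 + h - t0)). apply Rmult_lt_0_compat. apply Pos. lra. lra.
  lra.
Qed.

Lemma econt1 (f : R -> R) x :
  (forall e, 0 < e -> exists d, 0 < d /\ forall y, Rabs (y - x) < d -> Rabs (f y - f x) < e) ->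
  continuity_pt f x.
Proof.
  intros H. unfold continuity_pt, continue_in, limit1_in, limit_in. simpl. unfold R_dist.
  intros e He. destruct (H e He) as [d [Hd H']]. exists d. split; auto.
  intros y [_ Hy]. apply H'; auto.
Qed.

Definition clamp (R1 x : R) := Rmax (- R1) (Rmin R1 x).

Lemma clamp_in R1 x : 0 <= R1 -> Rabs (clamp R1 x) <= R1.
Proof. intros. unfold clamp, Rmax, Rmin. apply Rabs_le.
  repeat destruct Rle_dec; lra. Qed.

Lemma clamp_id R1 x : Rabs x <= R1 -> clamp R1 x = x.
Proof. intros H. apply Rabs_le_between in H. unfold clamp, Rmax, Rmin.
  repeat destruct Rle_dec; lra. Qed.

Lemma clamp_lip R1 x y : 0 <= R1 -> Rabs (clamp R1 x - clamp R1 y) <= Rabs (x - y).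
Proof. intros. unfold clamp, Rmax, Rmin.
  repeat destruct Rle_dec; unfold Rabs; repeat destruct Rcase_abs; lra. Qed.

Lemma box_unif (phi : C -> R) (R1 : R) : 0 <= R1 ->
  (forall y : C, Rabs (fst y) <= R1 -> Rabs (snd y) <= R1 -> econt phi y) ->
  forall e, 0 < e -> exists d, 0 < d /\ forall y y' : C,
    Rabs (fst y) <= R1 -> Rabs (snd y) <= R1 ->
    Rabs (fst y') <= R1 -> Rabs (snd y') <= R1 ->
    Rabs (fst y - fst y') < d -> Rabs (snd y - snd y') < d -> Rabs (phi y - phi y') < e.
Proof.
  intros HR Hc e He.
  assert (Hch : forall u v : R, {d : posreal | Rabs u <= R1 -> Rabs v <= R1 ->
     forall y : C, Rabs (fst y - u) < 2 * d -> Rabs (snd y - v) < 2 * d ->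
       Rabs (phi y - phi (u, v)) < e / 2}).
  { intros u v. apply constructive_indefinite_description.
    destruct (classic (Rabs u <= R1 /\ Rabs v <= R1)) as [[Hu Hv]|Hn].
    - destruct (Hc (u, v) Hu Hv (e/2) ltac:(lra)) as [d [Hd H]].
      exists (mkposreal (d/2) ltac:(lra)). simpl. intros _ _ y H1 H2.
      apply H; simpl; lra.
    - exists (mkposreal 1 ltac:(lra)). intros Hu Hv. exfalso; auto. }
  destruct (compactness_value_2d (- R1) R1 (- R1) R1 (fun u v => proj1_sig (Hch u v)))
    as [d Hd].
  exists d. split. apply cond_pos.
  intros y y' Hy1 Hy2 Hy'1 Hy'2 H1 H2.
  apply Rabs_le_between in Hy1. apply Rabs_le_between in Hy2.
  specialize (Hd (fst y) (snd y) Hy1 Hy2).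
  apply NNPP. intro Hno. apply Hd. intros [u [v [Hu [Hv [A [B C]]]]]].
  apply Hno.
  assert (Hdd := proj2_sig (Hch u v)). set (dd := proj1_sig (Hch u v)) in *. simpl in A, B, C, Hdd.
  assert (Hu' : Rabs u <= R1) by (apply Rabs_le; lra).
  assert (Hv' : Rabs v <= R1) by (apply Rabs_le; lra).
  assert (Hdp : 0 < dd) by apply cond_pos. assert (E1 := Hdd Hu' Hv' y ltac:(lra) ltac:(lra)).
  assert (E2 := Hdd Hu' Hv' y').
  assert (G1 : Rabs (fst y' - u) < 2 * dd).
  { replace (fst y' - u) with ((fst y - u) - (fst y - fst y')) by ring.
    eapply Rle_lt_trans. apply Rabs_triang. rewrite Rabs_Ropp. lra. }
  assert (G2 : Rabs (snd y' - v) < 2 * dd).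
  { replace (snd y' - v) with ((snd y - v) - (snd y - snd y')) by ring.
    eapply Rle_lt_trans. apply Rabs_triang. rewrite Rabs_Ropp. lra. }
  specialize (E2 G1 G2).
  replace (phi y - phi y') with ((phi y - phi (u,v)) - (phi y' - phi (u, v))) by ring.
  eapply Rle_lt_trans. apply Rabs_triang. rewrite Rabs_Ropp. lra.
Qed.

Lemma box_max (phi : C -> R) (R1 : R) : 0 <= R1 ->
  (forall y : C, Rabs (fst y) <= R1 -> Rabs (snd y) <= R1 -> econt phi y) ->
  exists zs : C, Rabs (fst zs) <= R1 /\ Rabs (snd zs) <= R1 /\
    forall y : C, Rabs (fst y) <= R1 -> Rabs (snd y) <= R1 -> phi y <= phi zs.
Proof.
  intros HR Hc.
  set (p2 := fun t s => phi (clamp R1 t, clamp R1 s)).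
  assert (U := box_unif phi R1 HR Hc).
  assert (U2 : forall e, 0 < e -> exists d, 0 < d /\ forall t s t' s',
     Rabs (t - t') < d -> Rabs (s - s') < d -> Rabs (p2 t s - p2 t' s') < e).
  { intros e He. destruct (U e He) as [d [Hd H]]. exists d. split; auto.
    intros t s t' s' H1 H2. unfold p2. apply H; simpl; try apply clamp_in; auto;
    eapply Rle_lt_trans; try apply clamp_lip; auto. }
  assert (Hex : forall s, {t | -R1 <= t <= R1 /\ forall c, -R1 <= c <= R1 -> p2 c s <= p2 t s}).
  { intros s. apply constructive_indefinite_description.
    destruct (continuity_ab_maj (fun t => p2 t s) (-R1) R1) as [Mx [H1 H2]]. lra.
    { intros c _. apply econt1. intros e He. destruct (U2 e He) as [d [Hd H]].
      exists d. split; auto. intros y Hy. apply H; auto. rewrite Rminus_diag, Rabs_R0; lra. }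
    exists Mx. split; auto. }
  set (T := fun s => proj1_sig (Hex s)).
  set (h := fun s => p2 (T s) s).
  assert (Hh : forall s s' d, (forall t, Rabs (p2 t s - p2 t s') < d) -> h s' - d < h s).
  { intros s s' d Hd. unfold h, T. destruct (Hex s) as [t1 [A1 B1]]. destruct (Hex s') as [t2 [A2 B2]].
    simpl. assert (Q := B1 t2 A2). specialize (Hd t2). apply Rabs_def2 in Hd. lra. }
  destruct (continuity_ab_maj h (-R1) R1) as [sM [H1 H2]]. lra.
  { intros c _. apply econt1. intros e He. destruct (U2 e He) as [d [Hd H]].
    exists d. split; auto. intros y Hy.
    assert (A := Hh y c e (fun t => H t y t c ltac:(rewrite Rminus_diag, Rabs_R0; lra) Hy)).
    assert (B := Hh c y e (fun t => H t c t y ltac:(rewrite Rminus_diag, Rabs_R0; lra)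
          ltac:(rewrite <- Rabs_Ropp; replace (-(c-y)) with (y - c) by ring; exact Hy))).
    apply Rabs_def1; lra. }
  exists (clamp R1 (T sM), clamp R1 sM). simpl. split. apply clamp_in; auto.
  split. apply clamp_in; auto.
  intros y Hy1 Hy2.
  assert (E : phi y = p2 (fst y) (snd y)).
  { unfold p2. rewrite !clamp_id by auto. destruct y; reflexivity. }
  rewrite E.
  assert (A : p2 (fst y) (snd y) <= h (snd y)).
  { unfold h, T. destruct (Hex (snd y)) as [t1 [A1 B1]]. simpl. apply B1.
    apply Rabs_le_between; auto. }
  assert (B := H1 (snd y) ltac:(apply Rabs_le_between; auto)).
  change (phi (clamp R1 (T sM), clamp R1 sM)) with (h sM). lra.
Qed.

Lemma sq_cont x x' a d : Rabs (x' - x) < d -> d <= 1 ->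
  Rabs ((x' - a)^2 - (x - a)^2) <= d * (2 * Rabs (x - a) + 1).
Proof.
  intros H Hd.
  replace ((x' - a)^2 - (x - a)^2) with ((x' - x) * ((x' - x) + 2 * (x - a))) by ring.
  rewrite Rabs_mult. assert (0 <= Rabs (x' - x)) by apply Rabs_pos.
  apply Rmult_le_compat. lra. apply Rabs_pos. lra.
  eapply Rle_trans. apply Rabs_triang. rewrite Rabs_mult, (Rabs_pos_eq 2) by lra. lra.
Qed.

Lemma sq_bound a b B : Rabs a <= B -> Rabs b <= B -> (a - b)^2 <= 4 * B^2.
Proof.
  intros Ha Hb. assert (Rabs (a - b) <= 2 * B).
  { unfold Rminus. eapply Rle_trans. apply Rabs_triang. rewrite Rabs_Ropp. lra. }
  rewrite <- (pow2_abs (a - b)).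
  assert (0 <= Rabs (a - b)) by apply Rabs_pos.
  replace (4 * B^2) with ((2*B)^2) by ring. apply pow_incr. lra.
Qed.

Lemma Rmax_lip a b c : Rabs (Rmax a c - Rmax b c) <= Rabs (a - b).
Proof. unfold Rmax. repeat destruct Rle_dec; unfold Rabs; repeat destruct Rcase_abs; lra. Qed.

Lemma MP (K : R -> Prop) (u ux uy : C -> R) :
  closed_set K ->
  (forall z, Om K z -> forall e, 0 < e -> exists d, 0 < d /\ forall y, Om K y ->
     Rabs (fst y - fst z) < d -> Rabs (snd y - snd z) < d -> Rabs (u y - u z) < e) ->
  (forall z, Om K z -> is_derive (fun t => u (t, snd z)) (fst z) (ux z) /\
     is_derive (fun s => u (fst z, s)) (snd z) (uy z) /\
     exists Dxx Dyy, is_derive (fun t => ux (t, snd z)) (fst z) Dxx /\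
       is_derive (fun s => uy (fst z, s)) (snd z) Dyy /\ 0 <= Dxx + Dyy) ->
  (forall b, K b -> forall e, 0 < e -> exists d, 0 < d /\ forall y, Om K y ->
     Rabs (fst y - b) < d -> Rabs (snd y) < d -> u y < e) ->
  (exists R0, forall y, Om K y -> R0 <= Rabs (fst y) \/ R0 <= Rabs (snd y) -> u y <= 0) ->
  forall z, Om K z -> u z <= 0.
Proof.
  intros HK Hc Hd Hb [R0 Hi] z0 Hz0.
  destruct (Rle_or_lt (u z0) 0) as [Hle|Hth]; auto. exfalso.
  set (th := u z0) in *.
  set (R1 := Rabs R0 + Rabs (fst z0) + Rabs (snd z0) + 1).
  assert (HR1 : 0 <= R1) by (unfold R1; generalize (Rabs_pos R0) (Rabs_pos (fst z0)) (Rabs_pos (snd z0)); lra).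
  assert (HR0 : R0 <= R1) by (unfold R1; generalize (Rle_abs R0) (Rabs_pos (fst z0)) (Rabs_pos (snd z0)); lra).
  assert (Hz1 : Rabs (fst z0) < R1) by (unfold R1; generalize (Rabs_pos R0) (Rabs_pos (snd z0)); lra).
  assert (Hz2 : Rabs (snd z0) < R1) by (unfold R1; generalize (Rabs_pos R0) (Rabs_pos (fst z0)); lra).
  set (eta := th / (64 * (R1 + 1)^2)).
  assert (Heta : 0 < eta).
  { unfold eta. apply Rdiv_lt_0_compat; auto. apply Rmult_lt_0_compat. lra. apply pow_lt. lra. }
  set (Q := fun y : C => (fst y - fst z0)^2 + (snd y - snd z0)^2).
  assert (HQ0 : forall y, 0 <= Q y).
  { intros y. unfold Q. apply Rplus_le_le_0_compat; apply pow2_ge_0. }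
  assert (HQ : forall y : C, Rabs (fst y) <= R1 + 1 -> Rabs (snd y) <= R1 + 1 -> eta * Q y <= th / 8).
  { intros y H1 H2. unfold Q.
    assert (A := sq_bound (fst y) (fst z0) (R1+1) H1 ltac:(lra)).
    assert (B := sq_bound (snd y) (snd z0) (R1+1) H2 ltac:(lra)).
    apply Rle_trans with (eta * (8 * (R1+1)^2)).
    apply Rmult_le_compat_l; lra.
    unfold eta. right. field. lra. }
  set (psi := fun y => u y + eta * Q y).
  set (phi := fun y => if excluded_middle_informative (Om K y) then Rmax (psi y) (th/2) else th/2).
  assert (Hphi_ge : forall y, psi y <= phi y \/ ~ Om K y).
  { intros y. unfold phi. destruct excluded_middle_informative. left. apply Rmax_l. right; auto. }
  assert (Hphi_ge2 : forall y, th/2 <= phi y).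
  { intros y. unfold phi. destruct excluded_middle_informative. apply Rmax_r. lra. }
  assert (Hcont : forall y : C, Rabs (fst y) <= R1 -> Rabs (snd y) <= R1 -> econt phi y).
  { intros y Hy1 Hy2 e He.
    destruct (classic (Om K y)) as [Hy|Hy].
    - destruct (Om_open K y HK Hy) as [r [Hr Hro]].
      destruct (Hc y Hy (e/2) ltac:(lra)) as [d1 [Hd1 Hu]].
      set (C0 := 2 * Rabs (fst y - fst z0) + 2 * Rabs (snd y - snd z0) + 2).
      assert (HC0 : 0 < C0) by (unfold C0; generalize (Rabs_pos (fst y - fst z0)) (Rabs_pos (snd y - snd z0)); lra).
      set (d2 := Rmin 1 (e / (4 * eta * C0))).
      assert (Hd2 : 0 < d2). { unfold d2. apply Rmin_glb_lt. lra. apply Rdiv_lt_0_compat. lra.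
        apply Rmult_lt_0_compat; lra. }
      exists (Rmin (Rmin r d1) d2). split. apply Rmin_glb_lt; auto. apply Rmin_glb_lt; auto.
      intros y' H1 H2.
      assert (A1 : Rabs (fst y' - fst y) < r /\ Rabs (fst y' - fst y) < d1 /\ Rabs (fst y' - fst y) < d2).
      { generalize (Rmin_l (Rmin r d1) d2) (Rmin_r (Rmin r d1) d2) (Rmin_l r d1) (Rmin_r r d1). lra. }
      assert (A2 : Rabs (snd y' - snd y) < r /\ Rabs (snd y' - snd y) < d1 /\ Rabs (snd y' - snd y) < d2).
      { generalize (Rmin_l (Rmin r d1) d2) (Rmin_r (Rmin r d1) d2) (Rmin_l r d1) (Rmin_r r d1). lra. }
      assert (Hy' : Om K y') by (apply Hro; tauto).
      unfold phi. destruct excluded_middle_informative as [_|N]; [|contradiction].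
      destruct excluded_middle_informative as [_|N]; [|contradiction].
      eapply Rle_lt_trans. apply Rmax_lip. unfold psi.
      assert (U1 := Hu y' Hy' ltac:(tauto) ltac:(tauto)).
      assert (d2 <= 1) by apply Rmin_l.
      assert (Q1 := sq_cont (fst y) (fst y') (fst z0) d2 ltac:(tauto) ltac:(lra)).
      assert (Q2 := sq_cont (snd y) (snd y') (snd z0) d2 ltac:(tauto) ltac:(lra)).
      assert (QQ : Rabs (Q y' - Q y) <= d2 * C0).
      { unfold Q, C0. replace ((fst y' - fst z0) ^ 2 + (snd y' - snd z0) ^ 2 -
           ((fst y - fst z0) ^ 2 + (snd y - snd z0) ^ 2)) with
          (((fst y' - fst z0) ^ 2 - (fst y - fst z0) ^ 2) + ((snd y' - snd z0) ^ 2 - (snd y - snd z0) ^ 2)) by ring.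
        eapply Rle_trans. apply Rabs_triang. lra. }
      assert (QQ2 : d2 * C0 <= e / (4 * eta)).
      { apply Rle_trans with (e / (4 * eta * C0) * C0). apply Rmult_le_compat_r. lra. apply Rmin_r.
        right. field. lra. }
      replace (u y' + eta * Q y' - (u y + eta * Q y)) with ((u y' - u y) + eta * (Q y' - Q y)) by ring.
      eapply Rle_lt_trans. apply Rabs_triang. rewrite Rabs_mult, (Rabs_pos_eq eta) by lra.
      assert (eta * Rabs (Q y' - Q y) <= e / 4).
      { apply Rle_trans with (eta * (e / (4 * eta))). apply Rmult_le_compat_l; lra.
        right. field. lra. }
      lra.
    - assert (Hy0 : snd y = 0 /\ K (fst y)) by (apply NNPP; exact Hy).
      destruct Hy0 as [Hy0 HKy].
      destruct (Hb (fst y) HKy (th/4) ltac:(lra)) as [d [Hdp Hdd]].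
      exists (Rmin d 1). split. apply Rmin_glb_lt; lra.
      intros y' H1 H2.
      assert (B1 : Rabs (fst y' - fst y) < d /\ Rabs (fst y' - fst y) < 1).
      { generalize (Rmin_l d 1) (Rmin_r d 1). lra. }
      assert (B2 : Rabs (snd y' - snd y) < d /\ Rabs (snd y' - snd y) < 1).
      { generalize (Rmin_l d 1) (Rmin_r d 1). lra. }
      rewrite Hy0, Rminus_0_r in B2.
      assert (E : phi y' = th / 2).
      { unfold phi. destruct excluded_middle_informative as [Hy'|_]; auto.
        assert (U1 := Hdd y' Hy' ltac:(tauto) ltac:(tauto)).
        assert (Rabs (fst y') <= R1 + 1).
        { replace (fst y') with ((fst y' - fst y) + fst y) by ring.
          eapply Rle_trans. apply Rabs_triang. lra. }
        assert (Rabs (snd y') <= R1 + 1) by lra.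
        assert (HQ1 := HQ y' ltac:(auto) ltac:(auto)).
        unfold Rmax. destruct Rle_dec; auto. unfold psi in n. lra. }
      assert (E2 : phi y = th / 2).
      { unfold phi. destruct excluded_middle_informative; auto. contradiction. }
      rewrite E, E2, Rminus_diag, Rabs_R0. lra. }
  destruct (box_max phi R1 HR1 Hcont) as [zs [Hs1 [Hs2 Hmax]]].
  assert (Hpz0 : th <= phi z0).
  { destruct (Hphi_ge z0) as [A|A]; [|contradiction].
    unfold psi, Q in A. rewrite !Rminus_diag in A. simpl in A. fold th in A. lra. }
  assert (Hzs : th <= phi zs) by (generalize (Hmax z0 ltac:(lra) ltac:(lra)); lra).
  assert (HOs : Om K zs).
  { intro N. unfold phi in Hzs. destruct excluded_middle_informative. contradiction. lra. }
  assert (Hps : phi zs = psi zs /\ th <= psi zs).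
  { unfold phi in *. destruct excluded_middle_informative; [|contradiction].
    unfold Rmax in *. destruct Rle_dec; lra. }
  destruct Hps as [Hps1 Hps2].
  assert (Hin : Rabs (fst zs) < R1 /\ Rabs (snd zs) < R1).
  { destruct (Rle_lt_dec R1 (Rabs (fst zs))) as [A|A].
    - exfalso. assert (A' : R0 <= Rabs (fst zs)) by lra. assert (U := Hi zs HOs (or_introl A')).
      assert (HQ1 := HQ zs ltac:(lra) ltac:(lra)). unfold psi in Hps2. lra.
    - destruct (Rle_lt_dec R1 (Rabs (snd zs))) as [B|B]; [|auto].
      exfalso. assert (B' : R0 <= Rabs (snd zs)) by lra. assert (U := Hi zs HOs (or_intror B')).
      assert (HQ1 := HQ zs ltac:(lra) ltac:(lra)). unfold psi in Hps2. lra. }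
  destruct (Om_open K zs HK HOs) as [r0 [Hr0 Hro]].
  set (r := Rmin r0 (Rmin (R1 - Rabs (fst zs)) (R1 - Rabs (snd zs)))).
  assert (Hr : 0 < r). { unfold r. repeat apply Rmin_glb_lt; lra. }
  assert (Hloc : forall y : C, Rabs (fst y - fst zs) < r -> Rabs (snd y - snd zs) < r ->
     Om K y /\ psi y <= psi zs).
  { intros y H1 H2.
    assert (r <= r0 /\ r <= R1 - Rabs (fst zs) /\ r <= R1 - Rabs (snd zs)).
    { unfold r. generalize (Rmin_l r0 (Rmin (R1 - Rabs (fst zs)) (R1 - Rabs (snd zs))))
       (Rmin_r r0 (Rmin (R1 - Rabs (fst zs)) (R1 - Rabs (snd zs))))
       (Rmin_l (R1 - Rabs (fst zs)) (R1 - Rabs (snd zs)))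
       (Rmin_r (R1 - Rabs (fst zs)) (R1 - Rabs (snd zs))). lra. }
    assert (Hy : Om K y) by (apply Hro; lra).
    split; auto.
    assert (Rabs (fst y) <= R1).
    { replace (fst y) with ((fst y - fst zs) + fst zs) by ring.
      eapply Rle_trans. apply Rabs_triang. lra. }
    assert (Rabs (snd y) <= R1).
    { replace (snd y) with ((snd y - snd zs) + snd zs) by ring.
      eapply Rle_trans. apply Rabs_triang. lra. }
    assert (A := Hmax y ltac:(auto) ltac:(auto)).
    destruct (Hphi_ge y) as [B|B]; [|contradiction]. lra. }
  destruct (Hd zs HOs) as [_ [_ [Dxx [Dyy [HDx [HDy HL]]]]]].
  assert (X : Dxx + eta * 2 <= 0).
  { apply (second_deriv_max (fun t => psi (t, snd zs))
       (fun t => ux (t, snd zs) + eta * (2 * (t - fst z0))) (fst zs) r); auto.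
    - intros t Ht.
      assert (Ho := proj1 (Hloc (t, snd zs) ltac:(simpl; lra) ltac:(simpl; rewrite Rminus_diag, Rabs_R0; lra))).
      destruct (Hd _ Ho) as [D1 _]. simpl in D1.
      unfold psi, Q. simpl. apply (is_derive_plus (fun t0 => u (t0, snd zs))). exact D1.
      auto_derive. auto. ring.
    - intros t Ht. rewrite <- surjective_pairing. apply (proj2 (Hloc (t, snd zs) ltac:(simpl; lra) ltac:(simpl; rewrite Rminus_diag, Rabs_R0; lra))).
    - apply (is_derive_plus (fun t0 => ux (t0, snd zs))). exact HDx.
      auto_derive. auto. ring. }
  assert (Y : Dyy + eta * 2 <= 0).
  { apply (second_deriv_max (fun s => psi (fst zs, s))
       (fun s => uy (fst zs, s) + eta * (2 * (s - snd z0))) (snd zs) r); auto.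
    - intros t Ht.
      assert (Ho := proj1 (Hloc (fst zs, t) ltac:(simpl; rewrite Rminus_diag, Rabs_R0; lra) ltac:(simpl; lra))).
      destruct (Hd _ Ho) as [_ [D1 _]]. simpl in D1.
      unfold psi, Q. simpl. apply (is_derive_plus (fun t0 => u (fst zs, t0))). exact D1.
      auto_derive. auto. ring.
    - intros t Ht. rewrite <- surjective_pairing. apply (proj2 (Hloc (fst zs, t) ltac:(simpl; rewrite Rminus_diag, Rabs_R0; lra) ltac:(simpl; lra))).
    - apply (is_derive_plus (fun t0 => uy (fst zs, t0))). exact HDy.
      auto_derive. auto. ring. }
  lra.
Qed.

Fixpoint sumlt (f : nat -> R) (k : nat) : R :=
  match k with O => 0 | S k' => sumlt f k' + f k' end.

Lemma is_derive_sumlt (F F' : nat -> R -> R) (m : nat) (t : R) :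
  (forall l, (l < m)%nat -> is_derive (F l) t (F' l t)) ->
  is_derive (fun x => sumlt (fun l => F l x) m) t (sumlt (fun l => F' l t) m).
Proof.
  induction m as [|m IH]; intros H; simpl.
  - apply (is_derive_const 0).
  - apply (is_derive_plus (fun x => sumlt (fun l => F l x) m) (F m)).
    apply IH. intros; apply H; lia. apply H; lia.
Qed.

Lemma sumlt_plus f g m : sumlt f m + sumlt g m = sumlt (fun l => f l + g l) m.
Proof. induction m; simpl; lra. Qed.

Lemma sumlt_ext f g m : (forall l, (l < m)%nat -> f l = g l) -> sumlt f m = sumlt g m.
Proof. induction m; simpl; intros H; auto. rewrite IHm by (intros; apply H; lia).
  rewrite H by lia. reflexivity. Qed.

Lemma sumlt_zero m : sumlt (fun _ => 0) m = 0.
Proof. induction m; simpl; lra. Qed.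

Lemma sumlt_le f m B : (forall l, (l < m)%nat -> f l <= B) -> sumlt f m <= INR m * B.
Proof.
  induction m; intros H. simpl; lra.
  rewrite S_INR. cbn [sumlt]. assert (A := IHm (fun l Hl => H l ltac:(lia))). assert (A2 := H m ltac:(lia)). lra.
Qed.

Lemma sumlt_nonneg f m : (forall i, 0 <= f i) -> 0 <= sumlt f m.
Proof. intros Hf. induction m; simpl. lra. generalize (Hf m); lra. Qed.

Lemma sumlt_ge_term f m l : (forall i, 0 <= f i) -> (l < m)%nat -> f l <= sumlt f m.
Proof.
  intros Hf. induction m; intros Hl. lia. simpl.
  destruct (Nat.eq_dec l m). subst. generalize (sumlt_nonneg f m Hf); lra.
  assert (A := IHm ltac:(lia)). generalize (Hf m). lra.
Qed.

Lemma Cmod_RtoC_sub (z : C) (a : R) : Cmod (z - RtoC a) = sqrt ((fst z - a)^2 + (snd z)^2).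
Proof. unfold Cmod, RtoC. simpl. f_equal. ring. Qed.

Lemma Cmod_RtoC_diff (y a : R) : Cmod (RtoC y - RtoC a) = Rabs (y - a).
Proof. rewrite Cmod_RtoC_sub. replace ((fst (RtoC y) - a)^2 + (snd (RtoC y))^2) with ((y-a)^2) by (simpl; ring).
  rewrite <- (pow2_abs (y - a)). apply sqrt_pow2. apply Rabs_pos. Qed.

Lemma prodlt_ext f g m : (forall l, (l < m)%nat -> f l = g l) -> prodlt f m = prodlt g m.
Proof. induction m; simpl; intros H; auto. rewrite IHm by (intros; apply H; lia).
  rewrite H by lia. reflexivity. Qed.

Lemma prodlt_nonneg f m : (forall l, 0 <= f l) -> 0 <= prodlt f m.
Proof. intros H; induction m; simpl. lra. apply Rmult_le_pos; auto. Qed.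

Lemma exp_half_ln x : 0 < x -> exp (ln x / 2) = sqrt x.
Proof.
  intros Hx. assert (Hs : 0 < sqrt x) by (apply sqrt_lt_R0; auto).
  rewrite <- (sqrt_sqrt x) at 1 by lra. rewrite ln_mult by auto.
  replace ((ln (sqrt x) + ln (sqrt x)) / 2) with (ln (sqrt x)) by field.
  apply exp_ln; auto.
Qed.

Lemma cont_rr (a : R) (z : C) : continuous (fun y : C => (fst y - a)^2 + (snd y)^2) z.
Proof.
  destruct z as [z1 z2].
  apply (@continuous_plus C_UniformSpace R_AbsRing R_NormedModule (fun y : C => (fst y - a)^2) (fun y : C => (snd y)^2)).
  - apply (continuous_comp (fun y : C => fst y) (fun v => (v - a)^2)).
    apply continuous_fst. apply (@ex_derive_continuous R_AbsRing R_NormedModule). auto_derive. auto.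
  - apply (continuous_comp (fun y : C => snd y) (fun v => v^2)).
    apply continuous_snd. apply (@ex_derive_continuous R_AbsRing R_NormedModule). auto_derive. auto.
Qed.


Definition rr (a : nat -> R) (l : nat) (z : C) := (fst z - a l)^2 + (snd z)^2.
Definition Sf (a : nat -> R) (m : nat) (z : C) := sumlt (fun l => ln (rr a l z) / 2) m.
Definition Pf (a : nat -> R) (m : nat) (z : C) := prodlt (fun l => Cmod (z - RtoC (a l))) m.

Lemma pow2_pos x : x <> 0 -> 0 < x ^ 2.
Proof. intros H. rewrite <- pow2_abs. apply pow_lt. apply Rabs_pos_lt; auto. Qed.

Lemma rr_pos K a m z l : (forall l, (l < m)%nat -> K (a l)) -> Om K z -> (l < m)%nat -> 0 < rr a l z.
Proof.
  intros Ha Hz Hl. unfold rr.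
  destruct (Req_dec (snd z) 0) as [H0|H0].
  - assert (fst z <> a l). { intro E. apply Hz. split; auto. rewrite E. apply Ha; auto. }
    rewrite H0. assert (0 < (fst z - a l)^2). { apply pow2_pos. lra. } simpl; lra.
  - assert (0 < (snd z)^2) by (apply pow2_pos; auto). generalize (pow2_ge_0 (fst z - a l)). lra.
Qed.

Lemma exp_S a m z : (forall l, (l < m)%nat -> 0 < rr a l z) -> exp (Sf a m z) = Pf a m z.
Proof.
  unfold Sf, Pf. induction m; intros H; cbn [sumlt prodlt]. apply exp_0.
  rewrite exp_plus, IHm by (intros; apply H; lia).
  rewrite exp_half_ln by (apply H; lia). rewrite Cmod_RtoC_sub. reflexivity.
Qed.

Lemma cont_S a m z : (forall l, (l < m)%nat -> 0 < rr a l z) -> continuous (Sf a m) z.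
Proof.
  unfold Sf. induction m; intros H; cbn [sumlt].
  - apply continuous_const.
  - apply (@continuous_plus C_UniformSpace R_AbsRing R_NormedModule
       (fun y => sumlt (fun l => ln (rr a l y) / 2) m) (fun y => ln (rr a m y) / 2)).
    apply IHm. intros; apply H; lia.
    apply (continuous_comp (rr a m) (fun v => ln v / 2)).
    apply cont_rr. apply (@ex_derive_continuous R_AbsRing R_NormedModule). auto_derive.
    apply H; lia.
Qed.

Lemma cont_P a m z : continuous (Pf a m) z.
Proof.
  unfold Pf. induction m; cbn [prodlt].
  - apply continuous_const.
  - apply (@continuous_mult C_UniformSpace R_AbsRing
       (fun y => prodlt (fun l => Cmod (y - RtoC (a l))) m) (fun y => Cmod (y - RtoC (a m)))).
    apply IHm.
    apply (continuous_ext (fun y => sqrt (rr a m y))).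
    intros y. rewrite Cmod_RtoC_sub. reflexivity.
    apply (continuous_comp (rr a m) sqrt).
    apply cont_rr. apply continuity_pt_filterlim. apply continuity_pt_sqrt.
    unfold rr. generalize (pow2_ge_0 (fst z - a m)) (pow2_ge_0 (snd z)). lra.
Qed.

Lemma der_u (f G : R -> R) x dF dG k c : is_derive f x dF -> is_derive G x dG ->
  is_derive (fun t => f t - k * G t - c) x (dF - k * dG).
Proof.
  intros H1 H2.
  assert (H3 := is_derive_scal G x k dG H2).
  assert (H4 := is_derive_minus _ _ _ _ _ H1 H3).
  assert (H5 := is_derive_minus _ _ _ _ _ H4 (is_derive_const c x)).
  simpl in H5. unfold minus, plus, opp, scal, zero in H5. simpl in H5. unfold mult in H5; simpl in H5.
  replace (dF - k * dG) with (dF + - (k * dG) + - 0) by ring. exact H5.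
Qed.

Lemma der_u2 (f G : R -> R) x dF dG k : is_derive f x dF -> is_derive G x dG ->
  is_derive (fun t => f t - k * G t) x (dF - k * dG).
Proof.
  intros H1 H2.
  assert (H3 := is_derive_scal G x k dG H2).
  assert (H4 := is_derive_minus _ _ _ _ _ H1 H3). exact H4.
Qed.

Lemma key (K : R -> Prop) (g : C -> R) (a : nat -> R) (m : nat) (N c eps : R) :
  closed_set K -> regular_green K g ->
  (forall l, (l < m)%nat -> K (a l)) ->
  (forall y, K y -> prodlt (fun l => Rabs (y - a l)) m <= N) ->
  N < c -> 0 < c -> 0 < eps ->
  forall z, Om K z -> Sf a m z - (INR m + eps) * g z - ln c <= 0.
Proof.
  intros HK [Hgc [Hg0 [Hharm [M0 [R0g HM]]]]] Ha HP Hc Hc0 He.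
  assert (Hrr : forall y, Om K y -> forall l, (l < m)%nat -> 0 < rr a l y).
  { intros y Hy l Hl. apply (rr_pos K a m); auto. }
  assert (Hk : 0 < INR m + eps) by (generalize (pos_INR m); lra).
  set (k := INR m + eps) in *.
  apply (MP K (fun y => Sf a m y - k * g y - ln c)
    (fun z => sumlt (fun l => (fst z - a l) / rr a l z) m - k * dx g z)
    (fun z => sumlt (fun l => snd z / rr a l z) m - k * dy g z) HK).
  -
    intros z Hz e He'.
    destruct (cont_econt _ _ (cont_S a m z (Hrr z Hz)) (e/2) ltac:(lra)) as [d1 [Hd1 H1]].
    destruct (cont_econt _ _ (Hgc z) (e/(2*k)) ltac:(apply Rdiv_lt_0_compat; lra)) as [d2 [Hd2 H2]].
    exists (Rmin d1 d2). split. apply Rmin_glb_lt; auto.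
    intros y Hy A B.
    assert (A1 : Rabs (fst y - fst z) < d1 /\ Rabs (fst y - fst z) < d2).
    { generalize (Rmin_l d1 d2) (Rmin_r d1 d2). lra. }
    assert (B1 : Rabs (snd y - snd z) < d1 /\ Rabs (snd y - snd z) < d2).
    { generalize (Rmin_l d1 d2) (Rmin_r d1 d2). lra. }
    assert (E1 := H1 y ltac:(tauto) ltac:(tauto)).
    assert (E2 := H2 y ltac:(tauto) ltac:(tauto)).
    replace (Sf a m y - k * g y - ln c - (Sf a m z - k * g z - ln c)) with
      ((Sf a m y - Sf a m z) + - (k * (g y - g z))) by ring.
    eapply Rle_lt_trans. apply Rabs_triang. rewrite Rabs_Ropp, Rabs_mult, (Rabs_pos_eq k) by lra.
    assert (k * Rabs (g y - g z) < k * (e / (2 * k))) by (apply Rmult_lt_compat_l; auto).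
    replace (k * (e / (2 * k))) with (e/2) in H by (field; lra). lra.
  -
    intros [t0 s0] Hz. simpl.
    destruct (Hharm (t0, s0) Hz) as [Gx [Gy [Gxx [Gxy [Gyx [Gyy [_ [_ [_ [_ Lap]]]]]]]]]].
    simpl in Gx, Gy, Gxx, Gxy, Gyx, Gyy, Lap.
    assert (Hp : forall l, (l < m)%nat -> 0 < (t0 - a l)^2 + s0^2).
    { intros l Hl. apply (Hrr (t0, s0) Hz l Hl). }
    split; [|split].
    + apply (der_u (fun t => Sf a m (t, s0)) (fun t => g (t, s0))).
      * unfold Sf, rr. simpl.
        apply (is_derive_sumlt (fun l t => ln ((t - a l)^2 + s0^2) / 2)
                 (fun l t => (t - a l) / ((t - a l)^2 + s0^2))).
        intros l Hl. assert (P := Hp l Hl). auto_derive. lra. field. lra.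
      * apply Derive_correct. exact Gx.
    + apply (der_u (fun s => Sf a m (t0, s)) (fun s => g (t0, s))).
      * unfold Sf, rr. simpl.
        apply (is_derive_sumlt (fun l s => ln ((t0 - a l)^2 + s^2) / 2)
                 (fun l s => s / ((t0 - a l)^2 + s^2))).
        intros l Hl. assert (P := Hp l Hl). auto_derive. lra. field. lra.
      * apply Derive_correct. exact Gy.
    + exists (sumlt (fun l => (s0^2 - (t0 - a l)^2) / ((t0 - a l)^2 + s0^2)^2) m - k * dx (dx g) (t0, s0)).
      exists (sumlt (fun l => ((t0 - a l)^2 - s0^2) / ((t0 - a l)^2 + s0^2)^2) m - k * dy (dy g) (t0, s0)).
      split; [|split].
      * apply (der_u2 (fun t => sumlt (fun l => (t - a l) / rr a l (t, s0)) m) (fun t => dx g (t, s0))).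
        -- unfold rr. simpl.
           apply (is_derive_sumlt (fun l t => (t - a l) / ((t - a l)^2 + s0^2))
                 (fun l t => (s0^2 - (t - a l)^2) / ((t - a l)^2 + s0^2)^2)).
           intros l Hl. assert (P := Hp l Hl). auto_derive. lra. field. lra.
        -- apply Derive_correct. exact Gxx.
      * apply (der_u2 (fun s => sumlt (fun l => s / rr a l (t0, s)) m) (fun s => dy g (t0, s))).
        -- unfold rr. simpl.
           apply (is_derive_sumlt (fun l s => s / ((t0 - a l)^2 + s^2))
                 (fun l s => ((t0 - a l)^2 - s^2) / ((t0 - a l)^2 + s^2)^2)).
           intros l Hl. assert (P := Hp l Hl). auto_derive. lra. field. lra.
        -- apply Derive_correct. exact Gyy.
      * replace (sumlt (fun l => (s0^2 - (t0 - a l)^2) / ((t0 - a l)^2 + s0^2)^2) m - k * dx (dx g) (t0, s0) +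
          (sumlt (fun l => ((t0 - a l)^2 - s0^2) / ((t0 - a l)^2 + s0^2)^2) m - k * dy (dy g) (t0, s0)))
          with (sumlt (fun l => (s0^2 - (t0 - a l)^2) / ((t0 - a l)^2 + s0^2)^2 +
                                ((t0 - a l)^2 - s0^2) / ((t0 - a l)^2 + s0^2)^2) m
                 - k * (dx (dx g) (t0, s0) + dy (dy g) (t0, s0)))
          by (rewrite <- sumlt_plus; ring).
        rewrite Lap. rewrite (sumlt_ext _ (fun _ => 0)). rewrite sumlt_zero. lra.
        intros l Hl. assert (P := Hp l Hl). field. lra.
  - intros b Hb e He'.
    assert (HPb : Pf a m (b, 0) <= N).
    { unfold Pf. rewrite (prodlt_ext _ (fun l => Rabs (b - a l))). apply HP; auto.
      intros l _. apply (Cmod_RtoC_diff b (a l)). }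
    destruct (cont_econt _ _ (cont_P a m (b, 0)) (c - Pf a m (b, 0)) ltac:(lra)) as [d1 [Hd1 H1]].
    destruct (cont_econt _ _ (Hgc (b, 0)) (e / k) ltac:(apply Rdiv_lt_0_compat; lra)) as [d2 [Hd2 H2]].
    exists (Rmin d1 d2). split. apply Rmin_glb_lt; auto.
    intros y Hy A B.
    assert (A1 : Rabs (fst y - b) < d1 /\ Rabs (fst y - b) < d2).
    { generalize (Rmin_l d1 d2) (Rmin_r d1 d2). lra. }
    assert (B1 : Rabs (snd y - 0) < d1 /\ Rabs (snd y - 0) < d2).
    { rewrite Rminus_0_r. generalize (Rmin_l d1 d2) (Rmin_r d1 d2). lra. }
    assert (E1 := H1 y ltac:(simpl; tauto) ltac:(simpl; tauto)).
    assert (E2 := H2 y ltac:(simpl; tauto) ltac:(simpl; tauto)).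
    assert (G0 : g (b, 0) = 0) by (apply (Hg0 b Hb)).
    rewrite G0, Rminus_0_r in E2.
    assert (Py : Pf a m y < c) by (apply Rabs_def2 in E1; lra).
    assert (HSy : exp (Sf a m y) = Pf a m y) by (apply exp_S; apply Hrr; auto).
    assert (Sl : Sf a m y < ln c).
    { rewrite <- (ln_exp (Sf a m y)). apply ln_increasing. apply exp_pos. lra. }
    assert (k * Rabs (g y) < k * (e / k)) by (apply Rmult_lt_compat_l; auto).
    replace (k * (e / k)) with e in H by (field; lra).
    assert (- (k * g y) <= k * Rabs (g y)).
    { rewrite Ropp_mult_distr_r. apply Rmult_le_compat_l. lra. rewrite <- Rabs_Ropp. apply Rle_abs. }
    lra.
  - set (A := sumlt (fun l => Rabs (a l)) m).
    set (T := (INR m * ln 2 + k * M0 - ln c) / eps).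
    exists (Rmax (Rmax (R0g + 1) (A + 1)) (exp T + 1)).
    intros y Hy Hbig.
    assert (Hcm : Rmax (Rmax (R0g + 1) (A + 1)) (exp T + 1) <= Cmod y).
    { assert (X := Rmax_Cmod y). generalize (Rmax_l (Rabs (fst y)) (Rabs (snd y)))
         (Rmax_r (Rabs (fst y)) (Rabs (snd y))). lra. }
    assert (C1 := Rmax_l (Rmax (R0g + 1) (A + 1)) (exp T + 1)).
    assert (C2 := Rmax_r (Rmax (R0g + 1) (A + 1)) (exp T + 1)).
    assert (C3 := Rmax_l (R0g + 1) (A + 1)).
    assert (C4 := Rmax_r (R0g + 1) (A + 1)).
    assert (HA0 : 0 <= A) by (apply sumlt_nonneg; intros; apply Rabs_pos).
    assert (HeT := exp_pos T).
    assert (Hc1 : exp T < Cmod y) by lra.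
    assert (Hc2 : A < Cmod y) by lra.
    assert (Hc3 : R0g < Cmod y) by lra.
    assert (Hcy : 0 < Cmod y) by lra.
    set (L := ln (Cmod y)).
    assert (HLT : T < L). { rewrite <- (ln_exp T). apply ln_increasing; auto. }
    assert (HgL : L - M0 <= g y). { assert (X := HM y Hc3). apply Rabs_le_between in X. fold L in X. lra. }
    assert (Hsq : (Cmod y)^2 = (fst y)^2 + (snd y)^2).
    { unfold Cmod. apply pow2_sqrt. generalize (pow2_ge_0 (fst y)) (pow2_ge_0 (snd y)); lra. }
    assert (HS : Sf a m y <= INR m * (ln 2 + L)).
    { apply sumlt_le. intros l Hl.
      assert (Hal : Rabs (a l) <= A) by (apply (sumlt_ge_term (fun l => Rabs (a l))); auto; intros; apply Rabs_pos).
      assert (Ha2 : (a l)^2 <= (Cmod y)^2).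
      { rewrite <- (pow2_abs (a l)). apply pow_incr. split. apply Rabs_pos. lra. }
      assert (Hr : rr a l y <= 4 * (Cmod y)^2).
      { unfold rr. assert (X := pow2_ge_0 (fst y + a l)).
        assert (E : 2 * (fst y)^2 + 2 * (a l)^2 - (fst y - a l)^2 = (fst y + a l)^2) by ring.
        generalize (pow2_ge_0 (snd y)). lra. }
      assert (Hr0 := Hrr y Hy l Hl).
      assert (X : ln (rr a l y) <= ln (4 * (Cmod y)^2)) by (apply ln_le; auto).
      rewrite ln_mult in X by (try lra; apply pow_lt; auto).
      rewrite ln_pow in X by auto. replace 4 with (2 * 2) in X by ring.
      rewrite ln_mult in X by lra. replace (INR 2) with 2 in X by (simpl; ring). fold L in X. lra. }
    assert (X1 : k * (L - M0) <= k * g y) by (apply Rmult_le_compat_l; lra).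
    assert (X2 : eps * T <= eps * L) by (apply Rmult_le_compat_l; lra).
    assert (X3 : eps * T = INR m * ln 2 + k * M0 - ln c) by (unfold T; field; lra).
    assert (E : INR m * (ln 2 + L) - k * (L - M0) - ln c = INR m * ln 2 + k * M0 - ln c - eps * L)
      by (unfold k; ring).
    lra.
Qed.

Lemma BW (K : R -> Prop) (g : C -> R) (a : nat -> R) (m : nat) (N : R) :
  closed_set K -> regular_green K g -> 0 <= N ->
  (forall l, (l < m)%nat -> K (a l)) ->
  (forall y, K y -> prodlt (fun l => Rabs (y - a l)) m <= N) ->
  forall z, Om K z -> Pf a m z <= N * exp (INR m * g z).
Proof.
  intros HK Hg HN Ha HP z Hz.
  destruct (Rle_or_lt (Pf a m z) (N * exp (INR m * g z))) as [H|H]; auto. exfalso.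
  assert (HS : exp (Sf a m z) = Pf a m z) by (apply exp_S; intros; apply (rr_pos K a m); auto).
  set (E := exp (INR m * g z)) in *.
  assert (HE : 0 < E) by apply exp_pos.
  set (V := exp (Sf a m z - INR m * g z)).
  assert (HV : Pf a m z = V * E).
  { unfold V, E. rewrite <- exp_plus, <- HS. f_equal. ring. }
  assert (HVN : N < V).
  { rewrite HV in H. apply (Rmult_lt_reg_r E); auto. }
  set (c := (V + N) / 2).
  assert (Hc1 : N < c) by (unfold c; lra).
  assert (Hc2 : c < V) by (unfold c; lra).
  assert (Hc0 : 0 < c) by lra.
  assert (Hgap : ln c < ln V) by (apply ln_increasing; auto).
  set (gap := ln V - ln c).
  set (eps := gap / (2 * (Rabs (g z) + 1))).
  assert (Hg1 : 0 < Rabs (g z) + 1) by (generalize (Rabs_pos (g z)); lra).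
  assert (Heps : 0 < eps) by (unfold eps, gap; apply Rdiv_lt_0_compat; lra).
  assert (X := key K g a m N c eps HK Hg Ha HP Hc1 Hc0 Heps z Hz).
  assert (LV : ln V = Sf a m z - INR m * g z) by (unfold V; apply ln_exp).
  assert (X2 : eps * (Rabs (g z) + 1) = gap / 2) by (unfold eps; field; lra).
  assert (X3 : eps * g z <= eps * Rabs (g z)) by (apply Rmult_le_compat_l; [lra | apply Rle_abs]).
  unfold gap in X2. lra.
Qed.

Lemma prodlt_nonneg' f k : (forall l, (l < k)%nat -> 0 <= f l) -> 0 <= prodlt f k.
Proof. induction k; intros H; simpl. lra. apply Rmult_le_pos. apply IHk; intros; apply H; lia. apply H; lia. Qed.

Lemma prodlt_mono f g k : (forall l, (l < k)%nat -> 0 <= f l <= g l) -> prodlt f k <= prodlt g k.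
Proof.
  induction k; intros H; simpl. lra.
  apply Rmult_le_compat. apply prodlt_nonneg'; intros; apply H; lia. apply H; lia.
  apply IHk; intros; apply H; lia. apply H; lia.
Qed.

Lemma prodlt_drop f k j : (j < k)%nat ->
  prodlt (fun l => if Nat.eqb l j then 1 else f l) k * f j = prodlt f k.
Proof.
  induction k; intros Hj. lia.
  cbn [prodlt]. destruct (Nat.eq_dec j k) as [E|E].
  - subst. rewrite Nat.eqb_refl.
    rewrite (prodlt_ext _ f). ring. intros l Hl. destruct (Nat.eqb_spec l k). lia. auto.
  - assert (Hk : Nat.eqb k j = false) by (apply Nat.eqb_neq; lia). rewrite Hk.
    rewrite <- IHk by lia. ring.
Qed.

Lemma main_ord (K : R -> Prop) (g : C -> R) (tau : R) (n : nat) (x : nat -> R) :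
  compact K -> regular_green K g -> 0 < tau <= 1 -> quasi_leja K tau x n ->
  forall delta M : R, 0 < delta -> is_G K g delta M ->
  forall i j : nat, (i < n)%nat -> (j < i)%nat ->
    tau * delta * exp (- (INR n * M)) <= Rabs (x i - x j).
Proof.
  intros HKc Hg Ht [HxK HQL] delta M Hd [HG1 _] i j Hi Hji.
  assert (HK : closed_set K) by (apply compact_P2; auto).
  assert (Hg' := Hg). destruct Hg' as [_ [Hg0 _]].
  assert (HM0 : 0 <= M).
  { assert (A : near_K K (2 * delta) (Defs.RtoC (x j))).
    { exists (x j). split. apply HxK; lia.
      change (Cmod (RtoC (x j) - RtoC (x j)) <= 2 * delta). rewrite Cmod_RtoC_diff.
      rewrite Rminus_diag, Rabs_R0. lra. }
    assert (B := HG1 _ A). rewrite Hg0 in B. auto. apply HxK; lia. }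
  set (k := i).
  set (P0 := prodlt (fun l => Rabs (x k - x l)) k).
  assert (HQ : forall y, K y -> tau * prodlt (fun l => Rabs (y - x l)) k <= P0).
  { intros y Hy. apply HQL; auto; lia. }
  assert (HP0 : 0 <= P0) by (apply prodlt_nonneg; intros; apply Rabs_pos).
  set (N := P0 / tau).
  assert (HN : 0 <= N) by (unfold N; apply Rdiv_le_0_compat; lra).
  assert (HPN : forall y, K y -> prodlt (fun l => Rabs (y - x l)) k <= N).
  { intros y Hy. unfold N. apply (Rmult_le_reg_l tau). lra.
    replace (tau * (P0 / tau)) with P0 by (field; lra). auto. }
  assert (Ha : forall l, (l < k)%nat -> K (x l)) by (intros; apply HxK; lia).
  assert (BWk := BW K g x k N HK Hg HN Ha HPN).
  assert (HP0' : 0 < P0).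
  { destruct HP0 as [A|A]; auto. exfalso.
    assert (Hz : Om K (0, 1)) by (intros [E _]; simpl in E; lra).
    assert (B := BWk (0, 1) Hz).
    assert (C0 : N = 0) by (unfold N; rewrite <- A; unfold Rdiv; ring).
    rewrite C0, Rmult_0_l in B.
    rewrite <- exp_S in B. generalize (exp_pos (Sf x k (0, 1))). lra.
    intros l Hl. apply (rr_pos K x k); auto. }
  assert (StepA : forall y, K y ->
     prodlt (fun l => if Nat.eqb l j then 1 else Rabs (y - x l)) k <= N * exp (INR k * M) / delta).
  { intros y Hy.
    set (z := (y, delta) : C).
    assert (Hz : Om K z) by (intros [E _]; simpl in E; lra).
    assert (B := BWk z Hz).
    assert (Hgz : g z <= M).
    { apply HG1. exists y. split; auto.
      change (Cmod (z - RtoC y) <= 2 * delta). rewrite Cmod_RtoC_sub. unfold z; cbn [fst snd].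
      replace ((y - y)^2 + delta^2) with (delta^2) by ring. rewrite sqrt_pow2; lra. }
    assert (B2 : exp (INR k * g z) <= exp (INR k * M)).
    { destruct (Rle_lt_or_eq_dec _ _ (Rmult_le_compat_l (INR k) _ _ (pos_INR k) Hgz)) as [C|C].
      left; apply exp_increasing; auto. rewrite C; lra. }
    assert (B3 : N * exp (INR k * g z) <= N * exp (INR k * M)) by (apply Rmult_le_compat_l; auto).
    unfold Pf in B. rewrite <- (prodlt_drop _ k j) in B by lia.
    set (qz := prodlt (fun l => if Nat.eqb l j then 1 else Cmod (z - RtoC (x l))) k) in *.
    assert (Hqz : 0 <= qz).
    { apply prodlt_nonneg. intros l. destruct (Nat.eqb l j). lra. apply Cmod_ge_0. }
    assert (Hcj : delta <= Cmod (z - RtoC (x j))).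
    { rewrite Cmod_RtoC_sub. unfold z; cbn [fst snd]. rewrite <- (sqrt_pow2 delta) at 1 by lra.
      apply sqrt_le_1_alt. generalize (pow2_ge_0 (y - x j)). lra. }
    assert (Hq1 : qz * delta <= N * exp (INR k * M)).
    { apply Rle_trans with (qz * Cmod (z - RtoC (x j))). apply Rmult_le_compat_l; auto. lra. }
    assert (Hq2 : prodlt (fun l => if Nat.eqb l j then 1 else Rabs (y - x l)) k <= qz).
    { apply prodlt_mono. intros l _. destruct (Nat.eqb l j). lra. split. apply Rabs_pos.
      unfold z. rewrite Cmod_RtoC_sub. cbn [fst snd]. rewrite <- (pow2_abs (y - x l)).
      rewrite <- (sqrt_pow2 (Rabs (y - x l))) at 1 by apply Rabs_pos.
      apply sqrt_le_1_alt. generalize (pow2_ge_0 delta). lra. }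
    apply Rle_trans with qz; auto.
    apply (Rmult_le_reg_r delta); auto. replace (N * exp (INR k * M) / delta * delta) with (N * exp (INR k * M)) by (field; lra).
    auto. }
  assert (A1 := StepA (x k) (HxK k Hi)).
  assert (A2 : P0 = prodlt (fun l => if Nat.eqb l j then 1 else Rabs (x k - x l)) k * Rabs (x k - x j)).
  { unfold P0. rewrite (prodlt_drop (fun l => Rabs (x k - x l))) by lia. reflexivity. }
  set (q := prodlt (fun l => if Nat.eqb l j then 1 else Rabs (x k - x l)) k) in *.
  set (d := Rabs (x k - x j)) in *.
  assert (Hd0 : 0 <= d) by apply Rabs_pos.
  assert (A3 : P0 <= N * exp (INR k * M) / delta * d) by (rewrite A2; apply Rmult_le_compat_r; auto).
  assert (A4 : tau * delta <= exp (INR k * M) * d).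
  { unfold N in A3. apply (Rmult_le_reg_l (P0 / (tau * delta))).
    apply Rdiv_lt_0_compat; auto. apply Rmult_lt_0_compat; lra.
    replace (P0 / (tau * delta) * (tau * delta)) with P0 by (field; lra).
    replace (P0 / (tau * delta) * (exp (INR k * M) * d)) with (P0 / tau * exp (INR k * M) / delta * d) by (field; lra).
    auto. }
  assert (A5 : exp (- (INR n * M)) <= exp (- (INR k * M))).
  { assert (INR k * M <= INR n * M).
    { apply Rmult_le_compat_r; auto. apply le_INR. lia. }
    destruct (Rle_lt_or_eq_dec (- (INR n * M)) (- (INR k * M))) as [C|C]. lra.
    left; apply exp_increasing; auto. rewrite C; lra. }
  assert (A6 : exp (INR k * M) * exp (- (INR k * M)) = 1) by (rewrite <- exp_plus, Rplus_opp_r; apply exp_0).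
  assert (A7 : tau * delta * exp (- (INR k * M)) <= d).
  { replace d with (exp (INR k * M) * d * exp (- (INR k * M))) by (rewrite Rmult_comm, <- Rmult_assoc, (Rmult_comm _ (exp _)), A6; ring).
    apply Rmult_le_compat_r. left; apply exp_pos. auto. }
  assert (A8 : tau * delta * exp (- (INR n * M)) <= tau * delta * exp (- (INR k * M))).
  { apply Rmult_le_compat_l; auto. apply Rmult_le_pos; lra. }
  lra.
Qed.

Theorem lemma1 (K : R -> Prop) (g : C -> R) (tau : R) (n : nat) (x : nat -> R) :
  compact K ->
  regular_green K g ->
  0 < tau <= 1 ->
  quasi_leja K tau x n ->
  forall delta M : R, 0 < delta -> is_G K g delta M ->
  forall i j : nat, (i < n)%nat -> (j < n)%nat -> i <> j ->
    tau * delta * exp (- (INR n * M)) <= Rabs (x i - x j).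
Proof.
  intros HKc Hg Ht HL delta M Hd HG i j Hi Hj Hij.
  destruct (proj1 (Nat.lt_gt_cases i j) Hij) as [H|H].
  - rewrite Rabs_minus_sym. apply (main_ord K g tau n x); auto.
  - apply (main_ord K g tau n x); auto.
Qed.
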